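(* Let $L$ be a finite list of boxes in $(0,1]^3$, let $k\ge2$ and $c\ge 2$ be integers, and run Steps 1–2 of algorithm 3SSP (described in the context) with parameters $k,c$. For $q=1,\dots,k$ let $w^q_1\ge w^q_2\ge\dots\ge w^q_{m^q}$ be the widths of the $m^q$ segments of type $q$ (segments containing items of group $G_q$), in the order they were opened. Let $g$ be the function (defined in the context) associated with a feasible solution $\bar\pi$ of the dual fractional bin packing LP for the instance $I(L)$ satisfying $\bar\pi_1\ge\dots\ge\bar\pi_p$, and let $G^q=\sum_{i=1}^{m^q} g(w^q_i)$. Then $$W(L) > (c-1)\sum_{q=1}^k G^q - ck,$$ where $W(L)=\sum_{R\in L} f_k(l(R))\,g(w(R))\,h(R)$.
   Context: Boxes $R=(l(R),w(R),h(R))$ (length, width, height). Algorithm 3SSP, Steps 1–2: partition $L$ into $G_1,\dots,G_k$, where for $i<k$, $G_i$ is the set of boxes of length in $(\frac1{i+1},\frac1i]$ and $G_k$ the set of boxes of length in $(0,\frac1k]$. Sort each group by non-increasing width. GNF (for $G_i$, $i<k$): while items remain, open a segment of size $(1,w_y,c)$ with $w_y$ the width of the first remaining item, divide it into $i$ slips of size $(\frac1i,w_y,c)$, and pack the remaining items in order into the slips by Next Fit with respect to height (stack in the current slip while total height $\le c$, else close it and move to the next slip); when all slips are closed, repeat. GNFDH (for $G_k$): while items remain, open a segment of size $(1,w_y,c)$ with $w_y$ the width of the first remaining item, find the maximal $j$ such that the first $j$ remaining items fit, ignoring widths, in the $1\times c$ length–height face by NFDH (sort by non-increasing height, pack in levels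 left to right, opening a new level on top when needed), pack them so, and repeat. $I(L)$ is the list of widths of all segments. Fractional bin packing: for a 1D instance with distinct sizes $s_1>s_2>\dots>s_p$ in $(0,1]$, a feasible pattern is a nonnegative integer vector $v=(v_1,\dots,v_p)$ with $\sum_j v_js_j\le1$. The dual LP is: maximize $\sum_j n_j\pi_j$ subject to $\sum_j v_j\pi_j\le1$ for every feasible pattern $v$ and $\pi\ge0$ ($n_j$ the multiplicity of size $s_j$). Given a feasible dual solution $\bar\pi$ with $\bar\pi_1\ge\dots\ge\bar\pi_p$, set $\bar\pi_{p+1}=0$, $s_0=1$, $s_{p+1}=0$ and define $g(0)=0$, $g(x)=\bar\pi_j$ for $x\in[s_j,s_{j-1})$ ($1\le j\le p+1$), and $g(1)=\bar\pi_1$. Weighting function: $f_k(x)=\frac1t$ if $\frac1{t+1}<x\le\frac1t$ with $1\le t<k$, and $f_k(x)=\frac{kx}{k-1}$ if $0<x\le\frac1k$. *)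

(* Defs.v *)
From HB Require Import structures.
From mathcomp Require Import all_boot all_order all_algebra.
From mathcomp Require Import reals.
Set Implicit Arguments. Unset Strict Implicit. Unset Printing Implicit Defensive.
Import Order.TTheory GRing.Theory Num.Theory.
Local Open Scope ring_scope.

Section ThreeSSP.
Variable R : realType.

Definition box := (R * R * R)%type.
Definition bl (b : box) : R := b.1.1.
Definition bw (b : box) : R := b.1.2.
Definition bh (b : box) : R := b.2.

(* State: current slip index j (0-based, j < i) and current stacked height cur.
   Output: widths of newly opened segments, in opening order. *)
Fixpoint gnf_aux (i : nat) (c : R) (s : seq box) (j : nat) (cur : R) : seq R :=
  match s with
  | [::] => [::]
  | x :: s' =>
      if cur + bh x <= c then gnf_aux i c s' j (cur + bh x)
      else if (j.+1 < i)%N then gnf_aux i c s' j.+1 (bh x)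
      else bw x :: gnf_aux i c s' 0 (bh x)
  end.

Definition gnf (i : nat) (c : R) (s : seq box) : seq R :=
  match s with
  | [::] => [::]
  | x :: s' => bw x :: gnf_aux i c s' 0 (bh x)
  end.

(* Items packed in the given order into levels of length 1; a new level is opened
   on top when the next item does not fit; the level height is the height of its
   first item (the list is sorted by non-increasing height before calling). *)
Fixpoint nfdh_aux (s : seq box) (cur : R) : R :=
  match s with
  | [::] => 0
  | x :: s' => if cur + bl x <= 1 then nfdh_aux s' (cur + bl x)
               else bh x + nfdh_aux s' (bl x)
  end.

Definition nfdh_height (s : seq box) : R :=
  match s with
  | [::] => 0
  | x :: s' => bh x + nfdh_aux s' (bl x)
  end.

(* srtH : a sorting function by non-increasing height (tie-breaking arbitrary). *)
Definition nfdh_fits (srtH : seq box -> seq box) (c : R) (s : seq box) : bool :=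
  nfdh_height (srtH s) <= c.

Definition gnfdh_take (srtH : seq box -> seq box) (c : R) (s : seq box) : nat :=
  (\max_(j < (size s).+1 | nfdh_fits srtH c (take j s)) (j : nat))%N.

(* fuel = size s suffices since at least one item is removed at each step
   (the maxn 1 is never active for boxes in (0,1]^3 and c >= 1). *)
Fixpoint gnfdh_aux (srtH : seq box -> seq box) (c : R) (fuel : nat) (s : seq box)
  : seq R :=
  match fuel with
  | 0 => [::]
  | fuel'.+1 =>
      match s with
      | [::] => [::]
      | x :: _ => bw x :: gnfdh_aux srtH c fuel' (drop (maxn 1 (gnfdh_take srtH c s)) s)
      end
  end.

Definition gnfdh (srtH : seq box -> seq box) (c : R) (s : seq box) : seq R :=
  gnfdh_aux srtH c (size s) s.

Definition group (k : nat) (L : seq box) (q : nat) : seq box :=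
  if (q < k)%N then [seq b <- L | ((q.+1)%:R)^-1 < bl b <= (q%:R)^-1]
  else [seq b <- L | bl b <= (k%:R)^-1].

(* ---------- Step 2: widths of the segments of type q, in opening order.
   srtW sorts a group by non-increasing width. *)
Definition segments (srtW srtH : seq box -> seq box) (k c : nat) (L : seq box)
  (q : nat) : seq R :=
  if (q < k)%N then gnf q c%:R (srtW (group k L q))
  else gnfdh srtH c%:R (srtW (group k L q)).

Definition IL (srtW srtH : seq box -> seq box) (k c : nat) (L : seq box) : seq R :=
  flatten [seq segments srtW srtH k c L q | q <- iota 1 k].

(* distinct sizes s_1 > s_2 > ... > s_p, stored 0-based: (sizes I)`_(j-1) = s_j *)
Definition sizes (I : seq R) : seq R := sort (fun a b => b < a) (undup I).

(* pi is 0-based as well: pi (j-1) = \bar\pi_j, j = 1..p *)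
Definition dual_feasible (I : seq R) (pi : nat -> R) : Prop :=
  (forall j, (j < size (sizes I))%N -> 0 <= pi j) /\
  (forall v : nat -> nat,
     \sum_(j < size (sizes I)) (v j)%:R * (sizes I)`_j <= 1 ->
     \sum_(j < size (sizes I)) (v j)%:R * pi j <= 1).

Definition dual_nonincreasing (I : seq R) (pi : nat -> R) : Prop :=
  forall j, (j.+1 < size (sizes I))%N -> pi j.+1 <= pi j.

(* g(1) = pi_1; otherwise g(x) = pi_j for x in [s_j, s_{j-1}) (s_0 = 1),
   i.e. j is the first index with s_j <= x; g = pi_{p+1} = 0 below s_p
   (in particular g(0) = 0). *)
Definition gfun (I : seq R) (pi : nat -> R) (x : R) : R :=
  if x == 1 then pi 0%N
  else let j := find (fun s => s <= x) (sizes I) in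
       if (j < size (sizes I))%N then pi j else 0.

Definition fk (k : nat) (x : R) : R :=
  if (0 < x) && (x <= (k%:R)^-1) then k%:R * x / (k%:R - 1)
  else \sum_(1 <= t < k) (if ((t.+1)%:R)^-1 < x <= (t%:R)^-1 then (t%:R)^-1 else 0).

Definition Wgt (k : nat) (g : R -> R) (L : seq box) : R :=
  \sum_(b <- L) fk k (bl b) * g (bw b) * bh b.

End ThreeSSP.

(* Main.v *)
Require Import Defs.
From HB Require Import structures.
From mathcomp Require Import all_boot all_order all_algebra.
From mathcomp Require Import reals.
From mathcomp Require Import ring lra.
Import Order.TTheory GRing.Theory Num.Theory.
Local Open Scope ring_scope.
Set Implicit Arguments. Unset Strict Implicit.



Lemma pi_chain (R : realType) (I : seq R) (pi : nat -> R) :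
  dual_nonincreasing I pi -> forall j j', (j <= j')%N ->
  (j' < size (sizes I))%N -> pi j' <= pi j.
Proof.
move=> Hn j j'; elim: j' => [|j' IH] Hjj Hs.
  by rewrite leqn0 in Hjj; rewrite (eqP Hjj).
rewrite leq_eqVlt in Hjj; case/orP: Hjj => [/eqP -> //|Hjj].
apply: le_trans (Hn _ Hs) _; apply: IH => //; exact: ltnW.
Qed.

Lemma g_ge0 (R : realType) (I : seq R) (pi : nat -> R) :
  dual_feasible I pi -> (0 < size (sizes I))%N -> forall x, 0 <= gfun I pi x.
Proof.
move=> [H0 _] Hs x; rewrite /gfun; case: ifP => _; first exact: H0.
by case: ifP => // /H0.
Qed.

Lemma pi_le1 (R : realType) (I : seq R) (pi : nat -> R) :
  dual_feasible I pi -> (forall s, s \in sizes I -> s <= 1) ->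
  forall j, (j < size (sizes I))%N -> pi j <= 1.
Proof.
move=> [_ H1] Hle j Hj.
have E : forall F : nat -> R, \sum_(i < size (sizes I)) ((i : nat) == j)%:R * F i = F j.
  move=> F; rewrite (bigD1 (Ordinal Hj)) //= eqxx mul1r big1 ?addr0 //.
  move=> i /eqP Hi; have -> : ((i : nat) == j) = false.
    by apply/negP => /eqP Hij; apply: Hi; apply: val_inj.
  by rewrite mul0r.
have := H1 (fun i => ((i : nat) == j) : nat).
rewrite !E; apply; apply: Hle; exact: mem_nth.
Qed.

Lemma g_le1 (R : realType) (I : seq R) (pi : nat -> R) :
  dual_feasible I pi -> (forall s, s \in sizes I -> s <= 1) ->
  (0 < size (sizes I))%N -> forall x, gfun I pi x <= 1.
Proof.
move=> Hf Hle Hs x; rewrite /gfun; case: ifP => _; first exact: (pi_le1 Hf Hle Hs).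
case: ifP => [H|_]; [exact: (pi_le1 Hf Hle H)|exact: ler01].
Qed.

Lemma g_mono (R : realType) (I : seq R) (pi : nat -> R) :
  dual_feasible I pi -> dual_nonincreasing I pi ->
  (0 < size (sizes I))%N -> forall x y, x <= y -> y <= 1 ->
  gfun I pi x <= gfun I pi y.
Proof.
move=> Hf Hn Hs x y Hxy Hy1.
have G0 := g_ge0 Hf Hs.
rewrite /gfun; case: (eqVneq y 1) => [Ey|Ny].
  case: ifP => _; first exact: lexx.
  case: ifP => H; last by case: Hf => H0 _; exact: H0.
  exact: (pi_chain Hn (leq0n _) H).
have Nx : (x == 1) = false.
  apply/negP => /eqP Ex; move: Ny; rewrite -Ex => /negP; apply.
  by rewrite eq_le Hxy Ex Hy1.
rewrite Nx; case: ifP => Hfx; last first.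
  case: ifP => // Hfy; case: Hf => H0 _; exact: H0.
have Hsub : (find (fun s : R => (s <= y)%R) (sizes I) <= find (fun s : R => (s <= x)%R) (sizes I))%N.
  apply: sub_find => s /= Hs'; exact: le_trans Hs' Hxy.
rewrite (leq_ltn_trans Hsub Hfx); exact: (pi_chain Hn Hsub Hfx).
Qed.



Lemma nfdh_aux_bound (R : realType) (K : R) (y : box R) (s : seq (box R)) :
  1 <= K ->
  sorted (fun u v => bh v <= bh u) s ->
  (forall z, z \in s -> [/\ 0 <= bl z, K * bl z <= 1 & 0 <= bh z]) ->
  forall cur a d (b : bool),
  0 <= d -> K * d <= 1 -> 0 <= a ->
  (forall z, z \in s -> (cur - d) * bh z <= a) ->
  (b -> y \in s) -> (b -> d = 0) ->
  (K - 1) * nfdh_aux s cur <=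
    K * (a + \sum_(z <- s) bl z * bh z - (if b then bl y * bh y else 0)).
Proof.
move=> HK; elim: s => [|z s IH] Hsort Hin cur a d b Hd0 Hd1 Ha Hinv Hby Hbd.
  case: b Hby Hbd => [/(_ isT)//|_ _].
  by rewrite /= big_nil mulr0 subr0 addr0; apply: mulr_ge0 => //; lra.
have Hs' : sorted (fun u v => bh v <= bh u) s := path_sorted Hsort.
have Hin' : forall w, w \in s -> [/\ 0 <= bl w, K * bl w <= 1 & 0 <= bh w].
  by move=> w Hw; apply: Hin; rewrite inE Hw orbT.
have [lz0 lz1 hz0] := Hin z (mem_head _ _).
have Hle : forall w, w \in s -> bh w <= bh z.
  have Htr : transitive (fun u v : box R => bh v <= bh u).
    by move=> u v w' H1 H2; exact: le_trans H2 H1.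
  move=> w Hw; have := order_path_min Htr Hsort.
  by move/allP => /(_ w Hw).
have Hinvz := Hinv z (mem_head _ _).
have Hinv' : forall w, w \in s -> (cur - d) * bh w <= a.
  by move=> w Hw; apply: Hinv; rewrite inE Hw orbT.
rewrite /= big_cons.
case: ifP => Hfit.
- case Ebz: (b && (z == y)).
  + move/andP: Ebz => [Eb /eqP Ezy]; subst z; rewrite Eb.
    have Hi : forall w, w \in s -> (cur + bl y - bl y) * bh w <= a.
      by move=> w Hw; rewrite addrK; have := Hinv' w Hw; rewrite (Hbd Eb) subr0.
    have H := IH Hs' Hin' (cur + bl y) a (bl y) false lz0 lz1 Ha Hi (fun h => ltac:(done)) (fun h => ltac:(done)).
    apply: le_trans H _; apply: ler_wpM2l; lra.
  + have Hby' : b -> y \in s.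
      move=> Eb; move: (Hby Eb); rewrite inE => /orP [/eqP Ey|//].
      by move: Ebz; rewrite Eb Ey eqxx.
    have := IH Hs' Hin' (cur + bl z) (a + bl z * bh z) d b Hd0 Hd1 _ _ Hby' Hbd.
    move=> H; apply: le_trans (H _ _) _.
    * by apply: addr_ge0 => //; apply: mulr_ge0.
    * move=> w Hw; have := Hinv' w Hw; have Hl := Hle w Hw.
      have := mulr_ge0 lz0 (_ : 0 <= bh z - bh w); rewrite subr_ge0 => /(_ Hl).
      lra.
    * by apply: ler_wpM2l; [lra| rewrite addrA].
- have Hnf : 1 < cur + bl z by rewrite ltNge Hfit.
  case: b Hby Hbd => Hby Hbd.
  + have Ed := Hbd isT; subst d.
    have Hch : (K - 1) * bh z <= K * a.
      have H0 : cur * bh z <= a by have := Hinvz; rewrite subr0.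
      have h1 : 0 <= K * (a - cur * bh z) by apply: mulr_ge0; lra.
      have h2 : 0 <= K * ((cur + bl z - 1) * bh z) by apply: mulr_ge0; [lra|apply: mulr_ge0 => //; lra].
      have h3 : 0 <= (1 - K * bl z) * bh z by apply: mulr_ge0 => //; lra.
      lra.
    case: (eqVneq z y) => [Ezy|Nzy].
    * subst z.
      have Hi : forall w, w \in s -> (bl y - bl y) * bh w <= 0.
        by move=> w Hw; rewrite subrr mul0r.
      have H := IH Hs' Hin' (bl y) 0 (bl y) false lz0 lz1 (lexx 0) Hi (fun h => ltac:(done)) (fun h => ltac:(done)).
      rewrite /= add0r subr0 in H.
      rewrite /=; lra.
    * have Hy' : y \in s.
        by move: (Hby isT); rewrite inE eq_sym (negbTE Nzy).
      have Hi : forall w, w \in s -> (bl z - 0) * bh w <= bl z * bh z.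
        move=> w Hw; rewrite subr0; apply: ler_wpM2l => //; exact: Hle.
      have Hz0 : 0 <= bl z * bh z by apply: mulr_ge0.
      have Kd : K * 0 <= 1 by rewrite mulr0; lra.
      have H := IH Hs' Hin' (bl z) (bl z * bh z) 0 true (lexx 0) Kd Hz0 Hi (fun _ => Hy') (fun _ => erefl).
      rewrite /= in H; rewrite /=; lra.
  + have Hch : (K - 1) * bh z <= K * (a + bl z * bh z).
      have h1 : 0 <= K * (a - (cur - d) * bh z) by apply: mulr_ge0; lra.
      have h2 : 0 <= K * ((cur + bl z - 1) * bh z) by apply: mulr_ge0; [lra|apply: mulr_ge0 => //; lra].
      have h3 : 0 <= (1 - K * d) * bh z by apply: mulr_ge0 => //; lra.
      lra.
    have Hi : forall w, w \in s -> (bl z - bl z) * bh w <= 0.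
      by move=> w Hw; rewrite subrr mul0r.
    have H := IH Hs' Hin' (bl z) 0 (bl z) false lz0 lz1 (lexx 0) Hi (fun h => ltac:(done)) (fun h => ltac:(done)).
    rewrite /= add0r subr0 in H.
    rewrite /=; lra.
Qed.

Lemma nfdh_bound (R : realType) (K : R) (y z : box R) (T : seq (box R)) :
  1 <= K ->
  sorted (fun u v => bh v <= bh u) (z :: T) ->
  (forall w, w \in z :: T -> [/\ 0 <= bl w, K * bl w <= 1 & 0 <= bh w]) ->
  y \in z :: T ->
  (K - 1) * (nfdh_height (z :: T) - bh z) <=
    K * (\sum_(w <- z :: T) bl w * bh w - bl y * bh y).
Proof.
move=> HK Hsort Hin Hy.
have Hs' : sorted (fun u v => bh v <= bh u) T := path_sorted Hsort.
have Hin' : forall w, w \in T -> [/\ 0 <= bl w, K * bl w <= 1 & 0 <= bh w].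
  by move=> w Hw; apply: Hin; rewrite inE Hw orbT.
have [lz0 lz1 hz0] := Hin z (mem_head _ _).
have Hle : forall w, w \in T -> bh w <= bh z.
  have Htr : transitive (fun u v : box R => bh v <= bh u).
    by move=> u v w' H1 H2; exact: le_trans H2 H1.
  move=> w Hw; have := order_path_min Htr Hsort.
  by move/allP => /(_ w Hw).
rewrite /nfdh_height big_cons (addrC (bh z)) addrK.
case: (eqVneq z y) => [Ezy|Nzy].
- subst z.
  have Hi : forall w, w \in T -> (bl y - bl y) * bh w <= 0.
    by move=> w Hw; rewrite subrr mul0r.
  have H := @nfdh_aux_bound _ _ y _ HK Hs' Hin' (bl y) 0 (bl y) false lz0 lz1 (lexx 0) Hi (fun h => ltac:(done)) (fun h => ltac:(done)).
  rewrite /= in H; lra.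
- have Hy' : y \in T by move: Hy; rewrite inE eq_sym (negbTE Nzy).
  have Hi : forall w, w \in T -> (bl z - 0) * bh w <= bl z * bh z.
    move=> w Hw; rewrite subr0; apply: ler_wpM2l => //; exact: Hle.
  have Hz0 : 0 <= bl z * bh z by apply: mulr_ge0.
  have Kd : K * 0 <= 1 by rewrite mulr0; lra.
  have H := @nfdh_aux_bound _ _ y _ HK Hs' Hin' (bl z) (bl z * bh z) 0 true (lexx 0) Kd Hz0 Hi (fun _ => Hy') (fun _ => erefl).
  rewrite /= in H; lra.
Qed.



Lemma gnf_aux_bound (R : realType) (q : nat) (c : R) (g : R -> R) (phi : box R -> R)
  (s : seq (box R)) :
  (0 < q)%N ->
  (forall x, 0 <= g x) ->
  (forall x y, x <= y -> y <= 1 -> g x <= g y) ->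
  (forall b, b \in s -> [/\ bw b <= 1, 0 <= bh b, bh b <= 1 &
                          (q%:R)^-1 * g (bw b) * bh b <= phi b]) ->
  sorted (fun a b => bw b <= bw a) s ->
  forall j cur C, (j < q)%N -> 0 <= C ->
  (forall y, y \in s -> (q%:R)^-1 * (j%:R * (c - 1) + cur) * g (bw y) <= C) ->
  (c - 1) * \sum_(w <- gnf_aux q c s j cur) g w <= C + \sum_(b <- s) phi b.
Proof.
move=> Hq G0 Gm; set Q := (q%:R)^-1.
have Q0 : 0 <= Q by rewrite /Q invr_ge0 ler0n.
elim: s => [|x s IH] Hin Hsort j cur C Hj HC Hinv.
  by rewrite /= !big_nil mulr0 addr0.
have Hs' := path_sorted Hsort.
have Hin' : forall b, b \in s -> [/\ bw b <= 1, 0 <= bh b, bh b <= 1 &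
                          Q * g (bw b) * bh b <= phi b].
  by move=> b Hb; apply: Hin; rewrite inE Hb orbT.
have [wx1 hx0 hx1 phix] := Hin x (mem_head _ _).
have Hgy : forall y, y \in s -> g (bw y) <= g (bw x).
  have Htr : transitive (fun u v : box R => bw v <= bw u).
    by move=> u v w' H1 H2; exact: le_trans H2 H1.
  move=> y Hy; apply: Gm => //; have := order_path_min Htr Hsort.
  by move/allP => /(_ y Hy).
have Hphix0 : 0 <= phi x.
  apply: le_trans phix; apply: mulr_ge0 => //; exact: mulr_ge0.
have Hinx := Hinv x (mem_head _ _).
have Hinv' : forall y, y \in s -> Q * (j%:R * (c - 1) + cur) * g (bw y) <= C.
  by move=> y Hy; apply: Hinv; rewrite inE Hy orbT.
have Hphy : forall y, y \in s -> Q * g (bw y) * bh x <= phi x.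
  move=> y Hy; apply: le_trans phix; apply: ler_wpM2r => //; apply: ler_wpM2l => //.
  exact: Hgy.
rewrite big_cons /=.
case: ifP => Hfit.
  rewrite addrA; apply: IH => //; first exact: addr_ge0.
  move=> y Hy; have := Hinv' y Hy; have := Hphy y Hy; rewrite !mulrDr !mulrDl; lra.
have Hnf : c - 1 <= cur.
  have : c < cur + bh x by rewrite ltNge Hfit.
  lra.
case: ifP => Hjq.
  rewrite addrA; apply: IH => //; first exact: addr_ge0.
  move=> y Hy; have := Hinv' y Hy; have := Hphy y Hy.
  have := mulr_ge0 (mulr_ge0 Q0 (G0 (bw y))) (_ : 0 <= cur - (c - 1)).
  rewrite subr_ge0 => /(_ Hnf).
  rewrite -natr1 !mulrDr !mulrDl; lra.
have Eq : q = j.+1.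
  by apply/eqP; rewrite eqn_leq Hj andbT leqNgt Hjq.
rewrite big_cons mulrDr.
have HQ : Q * (j.+1)%:R = 1 by rewrite /Q Eq mulVf // pnatr_eq0.
have Hc : (c - 1) * g (bw x) <= C.
  apply: le_trans Hinx.
  have H1 : 0 <= Q * g (bw x) * (cur - (c - 1)).
    by apply: mulr_ge0; [exact: mulr_ge0 | rewrite subr_ge0].
  have HQ' : Q * j%:R + Q = 1 by rewrite -{2}(mulr1 Q) -mulrDr natr1.
  have -> : (c - 1) * g (bw x) = (Q * j%:R + Q) * (c - 1) * g (bw x) by rewrite HQ' mul1r.
  move: H1; rewrite !mulrDr !mulrDl; lra.
apply: lerD => //.
apply: IH => //.
move=> y Hy; rewrite mul0r add0r; have := Hphy y Hy; lra.
Qed.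



Lemma take_ge1 (R : realType) (srtH : seq (box R) -> seq (box R)) (c : R) x s0 :
  (forall s, perm_eq (srtH s) s) -> bh x <= c ->
  (1 <= gnfdh_take srtH c (x :: s0))%N.
Proof.
move=> Hp Hx; rewrite /gnfdh_take.
have H1 : (1 < (size (x :: s0)).+1)%N by [].
apply: (leq_trans _ (leq_bigmax_cond (Ordinal H1) _)) => //=.
rewrite /nfdh_fits take0 (perm_small_eq _ (Hp [:: x])) //=.
by rewrite addr0.
Qed.

Lemma take_max (R : realType) (srtH : seq (box R) -> seq (box R)) (c : R) s :
  (gnfdh_take srtH c s < size s)%N ->
  ~~ nfdh_fits srtH c (take (gnfdh_take srtH c s).+1 s).
Proof.
move=> Hlt; apply/negP => Hf.
have H1 : ((gnfdh_take srtH c s).+1 < (size s).+1)%N by [].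
have := leq_bigmax_cond (Ordinal H1) (P := fun j : 'I_(size s).+1 => nfdh_fits srtH c (take j s)) (F := fun j => (j : nat)) Hf.
by rewrite -/(gnfdh_take srtH c s) ltnn.
Qed.

Lemma gnfdh_seg (R : realType) (K c : R) (srtH : seq (box R) -> seq (box R))
  (g : R -> R) (phi : box R -> R) (s : seq (box R)) z r :
  1 <= c -> 1 < K ->
  (forall s, perm_eq (srtH s) s /\ sorted (fun a b => bh b <= bh a) (srtH s)) ->
  (forall x, 0 <= g x) ->
  (forall x y, x <= y -> y <= 1 -> g x <= g y) ->
  (forall b, b \in s -> [/\ 0 <= bl b, K * bl b <= 1, 0 <= bh b, bh b <= 1 &
       bw b <= 1 /\ K * bl b / (K - 1) * g (bw b) * bh b <= phi b]) ->
  sorted (fun a b => bw b <= bw a) s ->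
  drop (gnfdh_take srtH c s) s = z :: r ->
  (c - 1) * g (bw z) <= \sum_(b <- take (gnfdh_take srtH c s) s) phi b.
Proof.
move=> Hc HK HsH G0 Gm Hin Hsort.
set t := gnfdh_take srtH c s => Hdr.
have Hts : (t < size s)%N.
  by rewrite ltnNge -subn_eq0 -size_drop Hdr.
have Hz : nth z s t = z by rewrite -[t]addn0 -nth_drop Hdr.
have Htk : take t.+1 s = rcons (take t s) z by rewrite (take_nth z Hts) Hz.
have Hnf := take_max Hts; rewrite -/t Htk /nfdh_fits -ltNge in Hnf.
set S := take t s in Htk Hnf *.
have Hzs : z \in s by rewrite -(cat_take_drop t s) Hdr mem_cat mem_head orbT.
have HSs : forall b, b \in S -> b \in s by move=> b Hb; exact: mem_take Hb.
have [Hperm HsrtT] := HsH (rcons S z).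
have HinT : forall w, w \in srtH (rcons S z) -> w \in s.
  move=> w; rewrite (perm_mem Hperm) mem_rcons inE => /orP [/eqP -> //|]; exact: HSs.
have HzT : z \in srtH (rcons S z) by rewrite (perm_mem Hperm) mem_rcons mem_head.
have Hsum : \sum_(w <- srtH (rcons S z)) bl w * bh w = \sum_(w <- S) bl w * bh w + bl z * bh z.
  by rewrite (perm_big _ Hperm) -cats1 big_cat big_seq1.
have Hmain : (K - 1) * (c - 1) < K * \sum_(w <- S) bl w * bh w.
  move: HsrtT HinT HzT Hsum Hnf; case: (srtH (rcons S z)) => [//|u T] HsrtT HinT HzT Hsum Hnf.
  have Hb : forall w, w \in u :: T -> [/\ 0 <= bl w, K * bl w <= 1 & 0 <= bh w].
    by move=> w /HinT /Hin [] ? ? ? ? _.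
  have K1 : 1 <= K by lra.
  have := nfdh_bound K1 HsrtT Hb HzT; rewrite Hsum.
  have [_ _ _ Hu1 _] := Hin u (HinT u (mem_head _ _)).
  have : 0 < (K - 1) * (nfdh_height (u :: T) - bh u - (c - 1)).
    by apply: mulr_gt0; lra.
  rewrite !mulrDr; lra.
have Hgz0 := G0 (bw z).
have Hwz : forall b, b \in S -> bw z <= bw b.
  move=> b Hb.
  have Htr : transitive (fun u v : box R => bw v <= bw u).
    by move=> u v w' H1 H2; exact: le_trans H2 H1.
  move: Hsort; rewrite (sorted_pairwise Htr) -(cat_take_drop t s) Hdr pairwise_cat.
  by case/and3P => /allrelP /(_ b z Hb (mem_head _ _)).
apply: (@le_trans _ _ (\sum_(b <- S) (K / (K - 1) * g (bw z)) * (bl b * bh b))).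
  rewrite -mulr_sumr.
  have HK1 : 0 < K - 1 by lra.
  have : c - 1 <= K / (K - 1) * \sum_(w <- S) bl w * bh w.
    rewrite mulrAC ler_pdivlMr //; lra.
  move=> H; rewrite (mulrAC (K / (K - 1))); exact: ler_wpM2r.
rewrite big_seq_cond [X in _ <= X]big_seq_cond; apply: ler_sum => b /andP [Hb _].
have [l0 _ h0 _ [wb1 Hphi]] := Hin b (HSs b Hb).
apply: le_trans Hphi.
have HK1 : 0 < K - 1 by lra.
have Hg : g (bw z) <= g (bw b) by apply: Gm => //; exact: Hwz.
have H0 : 0 <= K * bl b / (K - 1) * bh b.
  apply: mulr_ge0 => //; apply: divr_ge0; [apply: mulr_ge0 => //; lra | lra].
have := ler_wpM2l H0 Hg.
have E1 : K / (K - 1) * g (bw z) * (bl b * bh b) = K * bl b / (K - 1) * bh b * g (bw z) by ring.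
have E2 : K * bl b / (K - 1) * g (bw b) * bh b = K * bl b / (K - 1) * bh b * g (bw b) by ring.
by rewrite E1 E2.
Qed.

Lemma gnfdh_aux_bound (R : realType) (K c : R) (srtH : seq (box R) -> seq (box R))
  (g : R -> R) (phi : box R -> R) :
  1 <= c -> 1 < K ->
  (forall s, perm_eq (srtH s) s /\ sorted (fun a b => bh b <= bh a) (srtH s)) ->
  (forall x, 0 <= g x) ->
  (forall x y, x <= y -> y <= 1 -> g x <= g y) ->
  forall fuel (s : seq (box R)),
  (forall b, b \in s -> [/\ 0 <= bl b, K * bl b <= 1, 0 <= bh b, bh b <= 1 &
       bw b <= 1 /\ K * bl b / (K - 1) * g (bw b) * bh b <= phi b]) ->
  sorted (fun a b => bw b <= bw a) s ->
  (c - 1) * \sum_(w <- gnfdh_aux srtH c fuel s) g w <=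
    \sum_(b <- s) phi b + (c - 1) * (if s is x :: _ then g (bw x) else 0).
Proof.
move=> Hc HK HsH G0 Gm.
have phi0 : forall b, [/\ 0 <= bl b, K * bl b <= 1, 0 <= bh b, bh b <= 1 &
       bw b <= 1 /\ K * bl b / (K - 1) * g (bw b) * bh b <= phi b] -> 0 <= phi b.
  move=> b [l0 _ h0 _ [_ Hp]]; apply: le_trans Hp.
  apply: mulr_ge0 => //; apply: mulr_ge0 => //; apply: divr_ge0; [apply: mulr_ge0 => //|]; lra.
have Sphi0 : forall s, (forall b, b \in s -> [/\ 0 <= bl b, K * bl b <= 1, 0 <= bh b, bh b <= 1 &
       bw b <= 1 /\ K * bl b / (K - 1) * g (bw b) * bh b <= phi b]) -> 0 <= \sum_(b <- s) phi b.
  move=> s Hs; rewrite big_seq; apply: sumr_ge0 => b Hb; exact: phi0 (Hs b Hb).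
have Hc1 : 0 <= c - 1 by lra.
elim=> [|fuel IH] s Hin Hsort.
  rewrite /= big_nil mulr0; apply: addr_ge0; first exact: Sphi0.
  by case: s Hin Hsort => [|x s] *; apply: mulr_ge0.
case: s Hin Hsort => [|x s0] Hin Hsort.
  by rewrite /= !big_nil mulr0 addr0.
have [_ _ _ hx1 _] := Hin x (mem_head _ _).
have Ht1 := take_ge1 s0 (fun s => proj1 (HsH s)) (le_trans hx1 Hc).
rewrite /= (maxn_idPr Ht1) big_cons mulrDr.
set s := x :: s0 in Hin Hsort *.
set t := gnfdh_take srtH c s.
have Htr : transitive (fun u v : box R => bw v <= bw u).
  by move=> u v w' H1 H2; exact: le_trans H2 H1.
have HinD : forall b, b \in drop t s -> b \in s by move=> b; exact: mem_drop.
have HinT : forall b, b \in take t s -> b \in s by move=> b; exact: mem_take.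
have HsD : sorted (fun a b => bw b <= bw a) (drop t s).
  exact: (subseq_sorted Htr (drop_subseq s t) Hsort).
have IHD := IH (drop t s) (fun b Hb => Hin b (HinD b Hb)) HsD.
have -> : \sum_(b <- s) phi b = \sum_(b <- take t s) phi b + \sum_(b <- drop t s) phi b.
  by rewrite -big_cat cat_take_drop.
have HT0 : 0 <= \sum_(b <- take t s) phi b by apply: Sphi0 => b Hb; exact: Hin b (HinT b Hb).
move: IHD; case ED: (drop t s) => [|z r] IHD.
  by rewrite big_nil mulr0 in IHD; rewrite big_nil; lra.
have Hseg := gnfdh_seg Hc HK HsH G0 Gm Hin Hsort ED.
rewrite -/t in Hseg; lra.
Qed.



Lemma inv_le (R : realType) (m n : nat) : (0 < m)%N -> (m <= n)%N ->
  (n%:R)^-1 <= (m%:R)^-1 :> R.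
Proof.
move=> Hm Hmn; rewrite lef_pV2 ?posrE ?ltr0n ?ler_nat //.
exact: leq_trans Hm Hmn.
Qed.

Definition gpred (R : realType) (k q : nat) (b : box R) : bool :=
  if (q < k)%N then ((q.+1)%:R)^-1 < bl b <= (q%:R)^-1
  else bl b <= (k%:R)^-1.

Lemma groupE (R : realType) k (L : seq (box R)) q :
  group k L q = [seq b <- L | gpred k q b].
Proof. by rewrite /group /gpred; case: ifP. Qed.

Lemma cover (R : realType) (x : R) n : (1 <= n)%N -> 0 < x <= 1 ->
  x <= (n%:R)^-1 \/ exists2 q, (1 <= q < n)%N & ((q.+1)%:R)^-1 < x <= (q%:R)^-1.
Proof.
move=> + /andP [x0 x1]; elim: n => [//|n IH] _.
case: n IH => [|n] IH; first by left; rewrite invr1.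
case: (IH isT) => [Hx|[q Hq Hx]]; last by right; exists q => //; case/andP: Hq => -> /= /ltnW; rewrite ltnS.
case: (boolP (x <= ((n.+2)%:R)^-1)) => Hx2; first by left.
right; exists n.+1; [by rewrite /= ltnSn | by rewrite -ltNge in Hx2; rewrite Hx2 Hx].
Qed.

Lemma gpred_le (R : realType) k q (b : box R) : (1 <= q <= k)%N -> gpred k q b ->
  bl b <= (q%:R)^-1.
Proof.
rewrite /gpred => /andP [_ Hqk]; case: ifP => [_ /andP [] //|Hq H].
by have -> : q = k by apply/eqP; rewrite eqn_leq Hqk leqNgt Hq.
Qed.

Lemma gpred_uniq (R : realType) k q q' (b : box R) :
  (1 <= q <= k)%N -> (1 <= q' <= k)%N -> gpred k q b -> gpred k q' b -> q = q'.
Proof.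
have key : forall q q', (1 <= q <= k)%N -> (1 <= q' <= k)%N -> (q < q')%N ->
    gpred k q b -> gpred k q' b -> False.
  move=> {}q {}q' Hq Hq' Hlt G G'.
  have Hqk : (q < k)%N by apply: leq_trans Hlt _; case/andP: Hq'.
  move: G; rewrite /gpred Hqk => /andP [Hl _].
  have := gpred_le Hq' G'; have := inv_le R (isT : (0 < q.+1)%N) Hlt.
  move=> H1 H2; have := lt_le_trans Hl (le_trans H2 H1); by rewrite ltxx.
move=> Hq Hq' G G'; case: (ltngtP q q') => // H.
- by case: (key _ _ Hq Hq' H G G').
- by case: (key _ _ Hq' Hq H G' G).
Qed.

Lemma gpred_ex (R : realType) k (b : box R) : (1 <= k)%N -> 0 < bl b <= 1 ->
  exists2 q, q \in iota 1 k & gpred k q b.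
Proof.
move=> Hk Hb; case: (cover Hk Hb) => [Hx|[q Hq Hx]].
- exists k; first by rewrite mem_iota Hk /= addnC addn1 leqnn.
  by rewrite /gpred ltnn.
- exists q; first by rewrite mem_iota; case/andP: Hq => -> /= H; rewrite addnC addn1 ltnS ltnW.
  by rewrite /gpred; case/andP: Hq => _ ->.
Qed.

Lemma partition_sum (R : realType) k (L : seq (box R)) (F : box R -> R) :
  (1 <= k)%N -> (forall b, b \in L -> 0 < bl b <= 1) ->
  \sum_(q <- iota 1 k) \sum_(b <- group k L q) F b = \sum_(b <- L) F b.
Proof.
move=> Hk HL.
under eq_bigr do rewrite groupE big_filter big_mkcond.
rewrite exchange_big /= big_seq [X in _ = X]big_seq; apply: eq_bigr => b Hb.
have [q0 Hq0 G0] := gpred_ex Hk (HL b Hb).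
have Hr : forall q, q \in iota 1 k -> (1 <= q <= k)%N.
  by move=> q'; rewrite mem_iota addnC addn1 ltnS.
rewrite (bigD1_seq q0 Hq0 (iota_uniq _ _)) /= G0 big1_seq ?addr0 //.
move=> q /andP [Hq Hqi]; case: ifP => // G; exfalso; move/negP: Hq; apply.
by rewrite (gpred_uniq (Hr _ Hqi) (Hr _ Hq0) G G0).
Qed.

Lemma gnf_aux_mem (R : realType) (P : pred R) i (c : R) s j cur :
  (forall b, b \in s -> P (bw b)) -> forall w, w \in gnf_aux i c s j cur -> P w.
Proof.
elim: s j cur => [//|x s IH] j cur Hs w /=.
have Hs' : forall b, b \in s -> P (bw b) by move=> b Hb; apply: Hs; rewrite inE Hb orbT.
case: ifP => _; first exact: IH.
case: ifP => _; first exact: IH.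
rewrite inE => /orP [/eqP ->|]; last exact: IH.
by apply: Hs; exact: mem_head.
Qed.

Lemma gnfdh_aux_mem (R : realType) (P : pred R) srtH (c : R) fuel s :
  (forall b, b \in s -> P (bw b)) -> forall w, w \in gnfdh_aux srtH c fuel s -> P w.
Proof.
elim: fuel s => [//|fuel IH] [//|x s] Hs w /=.
rewrite inE => /orP [/eqP ->|]; first by apply: Hs; exact: mem_head.
apply: IH => b Hb; apply: Hs; exact: mem_drop Hb.
Qed.

Lemma segments_mem (R : realType) (P : pred R) srtW srtH k c (L : seq (box R)) q :
  (forall s, perm_eq (srtW s) s) ->
  (forall b, b \in L -> P (bw b)) -> forall w, w \in segments srtW srtH k c L q -> P w.
Proof.
move=> HW HL.
have Hs : forall b, b \in srtW (group k L q) -> P (bw b).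
  by move=> b; rewrite (perm_mem (HW _)) groupE mem_filter => /andP [_ /HL].
rewrite /segments; case: ifP => _.
- rewrite /gnf; case E: (srtW (group k L q)) Hs => [//|x s] Hs w.
  rewrite inE => /orP [/eqP ->|]; first by apply: Hs; exact: mem_head.
  apply: gnf_aux_mem => b Hb; by apply: Hs; rewrite inE Hb orbT.
- rewrite /gnfdh; exact: (gnfdh_aux_mem Hs).
Qed.

Lemma segments_nil (R : realType) srtW srtH k c (L : seq (box R)) q :
  (forall s, perm_eq (srtW s) s) ->
  segments srtW srtH k c L q = [::] -> group k L q = [::].
Proof.
move=> HW; have Hsz := perm_size (HW (group k L q)).
rewrite /segments; case: ifP => _.
- rewrite /gnf; case E: (srtW (group k L q)) Hsz => [|x s] Hsz //.
  by move=> _; apply/eqP; rewrite -size_eq0 -Hsz.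
- rewrite /gnfdh; case E: (srtW (group k L q)) Hsz => [|x s] Hsz //.
  by move=> _; apply/eqP; rewrite -size_eq0 -Hsz.
Qed.

Lemma fk_small (R : realType) k (x : R) : 0 < x -> x <= (k%:R)^-1 ->
  fk k x = k%:R * x / (k%:R - 1).
Proof. by move=> H0 H1; rewrite /fk H0 H1. Qed.

Lemma fk_mid (R : realType) k q (x : R) : (1 <= q)%N -> (q < k)%N ->
  ((q.+1)%:R)^-1 < x <= (q%:R)^-1 -> (q%:R)^-1 <= fk k x.
Proof.
move=> Hq1 Hqk /andP [Hl Hu]; rewrite /fk.
have -> : (0 < x) && (x <= (k%:R)^-1) = false.
  apply/negbTE; rewrite negb_and -ltNge; apply/orP; right.
  by apply: le_lt_trans Hl; apply: inv_le.
have Hq : q \in index_iota 1 k by rewrite mem_index_iota Hq1 Hqk.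
rewrite (bigD1_seq q Hq (iota_uniq _ _)) /= Hl Hu /= lerDl.
apply: sumr_ge0 => t _; case: ifP => // _; by rewrite invr_ge0 ler0n.
Qed.



Lemma group_bound (R : realType) (k c : nat) (L : seq (box R))
  (srtW srtH : seq (box R) -> seq (box R)) (g : R -> R) q :
  (2 <= k)%N -> (2 <= c)%N ->
  (forall b, b \in L ->
     [/\ 0 < bl b <= 1, 0 < bw b <= 1 & 0 < bh b <= 1]) ->
  (forall s, perm_eq (srtW s) s /\ sorted (fun a b => bw b <= bw a) (srtW s)) ->
  (forall s, perm_eq (srtH s) s /\ sorted (fun a b => bh b <= bh a) (srtH s)) ->
  (forall x, 0 <= g x) -> (forall x, g x <= 1) ->
  (forall x y, x <= y -> y <= 1 -> g x <= g y) ->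
  q \in iota 1 k ->
  (c%:R - 1) * \sum_(w <- segments srtW srtH k c L q) g w - (c%:R - 1) <=
    \sum_(b <- group k L q) fk k (bl b) * g (bw b) * bh b.
Proof.
move=> Hk Hc HL HsW HsH G0 G1 Gm Hq.
set phi := fun b => fk k (bl b) * g (bw b) * bh b.
have [Hperm Hsort] := HsW (group k L q).
have -> : \sum_(b <- group k L q) fk k (bl b) * g (bw b) * bh b =
          \sum_(b <- srtW (group k L q)) phi b.
  by apply: perm_big; rewrite perm_sym.
have Hin : forall b, b \in srtW (group k L q) -> b \in L /\ gpred k q b.
  by move=> b; rewrite (perm_mem Hperm) groupE mem_filter => /andP [].
have Hc1 : 1 <= (c%:R : R) by rewrite (ler_nat R 1 c) ltnW.
have Hq1 : (1 <= q <= k)%N by move: Hq; rewrite mem_iota addnC addn1 ltnS.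
rewrite /segments; case: ifP => Hqk.
- rewrite /gnf; move: Hin Hsort; case: (srtW (group k L q)) => [|x s0] Hin Hsort.
    by rewrite !big_nil mulr0; lra.
  have Hq0 : (0 < q)%N by case/andP: Hq1.
  have Hb : forall b, b \in x :: s0 -> [/\ bw b <= 1, 0 <= bh b, bh b <= 1 &
                          (q%:R)^-1 * g (bw b) * bh b <= phi b].
    move=> b /Hin [/HL [Hl /andP [_ Hw1] /andP [Hh0 Hh1]] G].
    split => //; first exact: ltW.
    rewrite /phi; apply: ler_wpM2r; first exact: ltW.
    apply: ler_wpM2r => //; apply: fk_mid; [by case/andP: Hq1 | by rewrite Hqk | by move: G; rewrite /gpred Hqk].
  have Hb' : forall b, b \in s0 -> [/\ bw b <= 1, 0 <= bh b, bh b <= 1 &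
                          (q%:R)^-1 * g (bw b) * bh b <= phi b].
    by move=> b Hb0; apply: Hb; rewrite inE Hb0 orbT.
  have [wx1 hx0 hx1 phix] := Hb x (mem_head _ _).
  have Htr : transitive (fun u v : box R => bw v <= bw u).
    by move=> u v w' H1 H2; exact: le_trans H2 H1.
  have Hphix0 : 0 <= phi x.
    apply: le_trans phix; apply: mulr_ge0 => //; apply: mulr_ge0 => //.
    by rewrite invr_ge0 ler0n.
  have Hinv : forall y, y \in s0 -> (q%:R)^-1 * (0%:R * (c%:R - 1) + bh x) * g (bw y) <= phi x.
    move=> y Hy; apply: le_trans phix; rewrite mul0r add0r -mulrA [bh x * _]mulrC mulrA.
    apply: ler_wpM2r => //; apply: ler_wpM2l; first by rewrite invr_ge0 ler0n.
    apply: Gm => //; have := order_path_min Htr Hsort; by move/allP => /(_ y Hy).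
  have := gnf_aux_bound Hq0 G0 Gm Hb' (path_sorted Hsort) Hq0 Hphix0 Hinv.
  rewrite !big_cons mulrDr; have := G1 (bw x).
  have : 0 <= c%:R - 1 :> R by lra.
  move=> H1 H2 H3.
  have : (c%:R - 1) * g (bw x) <= (c%:R - 1) :> R.
    by rewrite -[X in _ <= X]mulr1; apply: ler_wpM2l.
  lra.
- have Eqk : q = k by apply/eqP; rewrite eqn_leq; case/andP: Hq1 => _ ->; rewrite leqNgt Hqk.
  have HK : 1 < (k%:R : R) by rewrite (ltr_nat R 1 k).
  have Hb : forall b, b \in srtW (group k L q) ->
      [/\ 0 <= bl b, k%:R * bl b <= 1, 0 <= bh b, bh b <= 1 &
       bw b <= 1 /\ k%:R * bl b / (k%:R - 1) * g (bw b) * bh b <= phi b].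
    move=> b /Hin [/HL [/andP [Hl0 Hl1] /andP [_ Hw1] /andP [Hh0 Hh1]] G].
    move: G; rewrite /gpred Hqk => Hlk.
    split => //; first exact: ltW.
    + by rewrite -ler_pdivlMl ?ltr0n ?mulr1 //; apply: leq_trans Hk.
    + exact: ltW.
    + by split => //; rewrite /phi fk_small.
  have := gnfdh_aux_bound Hc1 HK HsH G0 Gm (size (srtW (group k L q))) Hb Hsort.
  rewrite /gnfdh; move: Hb; case: (srtW (group k L q)) => [|x s0] Hb.
    by rewrite !big_nil mulr0; lra.
  have : 0 <= c%:R - 1 :> R by lra.
  move=> H1 H2.
  have : (c%:R - 1) * g (bw x) <= (c%:R - 1) :> R.
    by rewrite -[X in _ <= X]mulr1; apply: ler_wpM2l.
  lra.
Qed.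

Unset Implicit Arguments.

Theorem lemma6 (R : realType) (k c : nat) (L : seq (box R))
  (srtW srtH : seq (box R) -> seq (box R)) (pi : nat -> R) :
  (2 <= k)%N -> (2 <= c)%N ->
  (forall b, b \in L ->
     [/\ 0 < bl b <= 1, 0 < bw b <= 1 & 0 < bh b <= 1]) ->
  (forall s, perm_eq (srtW s) s /\ sorted (fun a b => bw b <= bw a) (srtW s)) ->
  (forall s, perm_eq (srtH s) s /\ sorted (fun a b => bh b <= bh a) (srtH s)) ->
  dual_feasible (IL srtW srtH k c L) pi ->
  dual_nonincreasing (IL srtW srtH k c L) pi ->
  let g := gfun (IL srtW srtH k c L) pi in
  Wgt k g L >
    (c%:R - 1) * \sum_(1 <= q < k.+1) \sum_(w <- segments srtW srtH k c L q) g w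
    - c%:R * k%:R.
Proof.
move=> Hk Hc HL HsW HsH Hf Hn; cbv zeta; set g := gfun (IL srtW srtH k c L) pi.
have Hk1 : (1 <= k)%N by apply: leq_trans Hk.
have HLl : forall b, b \in L -> 0 < bl b <= 1 by move=> b /HL [].
have Hii : index_iota 1 k.+1 = iota 1 k by rewrite /index_iota subSS subn0.
have Hkpos : 0 < (k%:R : R) by rewrite ltr0n.
have Hc1 : 1 <= (c%:R : R) by rewrite (ler_nat R 1 c) ltnW.
rewrite /Wgt -(partition_sum (fun b => fk k (bl b) * g (bw b) * bh b) Hk1 HLl) -Hii.
have [E|NE] := eqVneq (IL srtW srtH k c L) [::].
- have Hseg : forall q, q \in index_iota 1 k.+1 -> segments srtW srtH k c L q = [::].
    move=> q Hq; case Es: (segments srtW srtH k c L q) => [//|w r].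
    have : w \in IL srtW srtH k c L.
      apply/flatten_mapP; exists q; first by rewrite -Hii.
      by rewrite Es mem_head.
    by rewrite E.
  rewrite [X in _ < X]big_seq (eq_bigr (fun _ => 0)); last first.
    move=> q Hq; rewrite (segments_nil (fun s => proj1 (HsW s)) (Hseg q Hq)).
    by rewrite big_nil.
  rewrite [X in _ * X]big_seq (eq_bigr (fun _ => 0)); last first.
    by move=> q Hq; rewrite Hseg // big_nil.
  rewrite !big1 // mulr0 sub0r oppr_lt0; apply: mulr_gt0 => //; lra.
- have Hs : (0 < size (sizes (IL srtW srtH k c L)))%N.
    move: NE; case: (IL srtW srtH k c L) => [//|a r] _.
    have : a \in sizes (a :: r) by rewrite /sizes mem_sort mem_undup mem_head.
    by case: (sizes (a :: r)).
  have Hle : forall s, s \in sizes (IL srtW srtH k c L) -> s <= 1.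
    move=> s; rewrite /sizes mem_sort mem_undup => /flatten_mapP [q _ Hq].
    move: Hq; apply: (segments_mem (P := fun w : R => w <= 1)).
      by move=> t; case: (HsW t).
    by move=> b /HL [_ /andP [_ ->]].
  have G0 := g_ge0 Hf Hs; have G1 := g_le1 Hf Hle Hs; have Gm := g_mono Hf Hn Hs.
  have H : \sum_(q <- index_iota 1 k.+1)
             ((c%:R - 1) * \sum_(w <- segments srtW srtH k c L q) g w - (c%:R - 1)) <=
           \sum_(q <- index_iota 1 k.+1) \sum_(b <- group k L q) fk k (bl b) * g (bw b) * bh b.
    rewrite big_seq [X in _ <= X]big_seq; apply: ler_sum => q Hq.
    by apply: group_bound => //; rewrite -Hii.
  rewrite sumrB -mulr_sumr sumr_const_nat subSS subn0 -mulr_natr in H.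
  lra.
Qed.
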